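(* Let $n\ge 1$, let $a_1,\dots,a_n$ be positive integers, let $b\ge 0$ be an integer, and let $M$ be the least common multiple of $a_1,\dots,a_n$. Put $d_i=M/a_i$ for $i=1,\dots,n$, and $$f(t_1,\dots,t_n,t_{n+1})=\frac{1}{M}\Bigl(b-\sum_{i=1}^n a_it_i-t_{n+1}\Bigr).$$ Let $Q(b)$ be the number of $n$-tuples $(x_1,\dots,x_n)$ of non-negative integers with $\sum_{i=1}^n a_ix_i\le b$. Then $$Q(b)=\sum_{t_1=0}^{d_1-1}\cdots\sum_{t_n=0}^{d_n-1}\sum_{t_{n+1}=0}^{M-1} C\bigl(f(t_1,\dots,t_n,t_{n+1})+1;\,n\bigr).$$
   Context: For a real number $k$ and a non-negative integer $l$, define $C(k;l)=\frac{1}{l!}\,k(k+1)\cdots(k+l-1)$ if $k$ is a positive integer (natural number), and $C(k;l)=0$ otherwise (in particular $C(k;l)=0$ whenever $k$ is not an integer or $k\le 0$). *)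

(* Defs.v *)
From mathcomp Require Import all_boot all_order all_algebra.
Set Implicit Arguments. Unset Strict Implicit. Unset Printing Implicit Defensive.
Import Order.TTheory GRing.Theory Num.Theory.
Local Open Scope ring_scope.

(* C(k;l) = (1/l!) k(k+1)...(k+l-1) if k is a positive integer, 0 otherwise.
   The arguments k that occur in the theorem are rational, so k : rat. *)
Definition Cpoch (k : rat) (l : nat) : rat :=
  if (k \is a Num.nat) && (0 < k)
  then (l`!)%:R^-1 * \prod_(j < l) (k + j%:R)
  else 0.

Definition lcm_all (n : nat) (a : 'I_n -> nat) : nat := \big[lcmn/1%N]_(i < n) a i.

(* Q(b) = #{ x in N^n | sum a_i x_i <= b }.  Since every a_i >= 1, any such x
   has x_i <= b, so it suffices to range over coordinates in 'I_b.+1. *)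
Definition Qcount (n : nat) (a : 'I_n -> nat) (b : nat) : nat :=
  #|[set x : {ffun 'I_n -> 'I_b.+1} | (\sum_(i < n) a i * x i <= b)%N]|.

Definition fval (n : nat) (a : 'I_n -> nat) (b : nat) (t : 'I_n -> nat) (s : nat) : rat :=
  (b%:R - (\sum_(i < n) (a i)%:R * (t i)%:R) - s%:R) / (lcm_all a)%:R.

(* Main.v *)
Require Import Defs.
From mathcomp Require Import all_boot all_order all_algebra.
From mathcomp Require Import zify.
Import Order.TTheory GRing.Theory Num.Theory.
Set Implicit Arguments. Unset Strict Implicit. Unset Printing Implicit Defensive.
Local Open Scope nat_scope.

Definition fcons (T : Type) n (c : T) (g : {ffun 'I_n -> T}) : {ffun 'I_n.+1 -> T} :=
  [ffun i => if unlift ord0 i is Some j then g j else c].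

Lemma sum_ffunS (T : finType) n (F : {ffun 'I_n.+1 -> T} -> nat) :
  \sum_(f : {ffun 'I_n.+1 -> T}) F f =
  \sum_(c : T) \sum_(g : {ffun 'I_n -> T}) F (fcons c g).
Proof.
rewrite pair_big /=.
rewrite (reindex (fun p : T * {ffun 'I_n -> T} => fcons p.1 p.2)) //=.
exists (fun f : {ffun 'I_n.+1 -> T} => (f ord0, [ffun j => f (lift ord0 j)])).
  move=> [c g] _ /=; rewrite /fcons ffunE unlift_none; congr (_, _).
  by apply/ffunP => j; rewrite !ffunE liftK.
move=> f _ /=; apply/ffunP => i; rewrite /fcons ffunE.
by case: unliftP => [j ->|->]; rewrite ?ffunE.
Qed.

Lemma sum_fcons n B (c : 'I_B) (g : {ffun 'I_n -> 'I_B}) :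
  \sum_(i < n.+1) (fcons c g i : nat) = c + \sum_(i < n) (g i : nat).
Proof.
rewrite big_ord_recl /fcons ffunE unlift_none; congr (_ + _).
by apply: eq_bigr => j _; rewrite ffunE liftK.
Qed.

Lemma hockey n k : \sum_(c < k.+1) 'C(k - c + n, n) = 'C(k + n.+1, n.+1).
Proof.
elim: k => [|k IH]; first by by rewrite big_ord1 subnn add0n binn add0n binn.
rewrite big_ord_recl subn0.
rewrite (eq_bigr (fun c : 'I_k.+1 => 'C(k - c + n, n))); last first.
  by move=> c _; rewrite /= /bump /= add1n subSS.
by rewrite IH addSn (addnS k n) binS addnS addnC.
Qed.

Lemma stars_bars n B k : k <= B ->
  \sum_(y : {ffun 'I_n -> 'I_B.+1}) (\sum_i (y i : nat) <= k) = 'C(k + n, n).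
Proof.
elim: n k => [|n IH] k kB.
  rewrite (eq_bigr (fun _ => 1)); last by move=> y _; rewrite big_ord0.
  by rewrite sum1_card card_ffun !card_ord bin0.
rewrite sum_ffunS.
under eq_bigr => c _ do under eq_bigr => g _ do rewrite sum_fcons.
transitivity (\sum_(c < B.+1 | c < k.+1) 'C(k - c + n, n)).
  rewrite [RHS]big_mkcond /=; apply: eq_bigr => c _.
  case: ltnP => ck.
    rewrite -(IH (k - c)); last by lia.
    by apply: eq_bigr => g _; rewrite leq_subRL.
  by rewrite big1 // => g _; apply/eqP; rewrite eqb0 -ltnNge; lia.
rewrite -(big_mkord (fun c => c < k.+1) (fun c => 'C(k - c + n, n))).
rewrite -hockey; transitivity (\sum_(0 <= i < k.+1) 'C(k - i + n, n)); last by rewrite big_mkord.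
by rewrite [RHS](big_nat_widen _ _ B.+1).
Qed.

Definition dd n (a : 'I_n -> nat) i := lcm_all a %/ a i.

Lemma M_gt0 n (a : 'I_n -> nat) : (forall i, 0 < a i) -> 0 < lcm_all a.
Proof. by move=> Ha; rewrite /lcm_all; elim/big_ind: _ => // x y; rewrite lcmn_gt0 => -> ->. Qed.

Lemma a_dvd n (a : 'I_n -> nat) i : a i %| lcm_all a.
Proof. by apply/dvdn_biglcmP: i isT. Qed.

Lemma ad_eq n (a : 'I_n -> nat) i : a i * dd a i = lcm_all a.
Proof. by rewrite /dd mulnC divnK // a_dvd. Qed.

Lemma dd_gt0 n (a : 'I_n -> nat) i : (forall i, 0 < a i) -> 0 < dd a i.
Proof.
move=> Ha; have := M_gt0 Ha; rewrite -(ad_eq a i) muln_gt0; by case/andP.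
Qed.

Lemma dd_leM n (a : 'I_n -> nat) i : dd a i <= lcm_all a.
Proof. exact: leq_div. Qed.

Definition Rx n (a : 'I_n -> nat) b (t : 'I_n -> nat) (s : nat)
  (x : {ffun 'I_n -> 'I_b.+1}) : bool :=
  [&& \sum_i a i * x i <= b, [forall i, x i %% dd a i == t i] &
      (b - \sum_i a i * x i) %% lcm_all a == s].
Arguments Rx {n} a b t s x.

Lemma sum_decomp n (a : 'I_n -> nat) (v t : 'I_n -> nat) :
  (forall i, v i %% dd a i = t i) ->
  \sum_i a i * v i = lcm_all a * \sum_i (v i %/ dd a i) + \sum_i a i * t i.
Proof.
move=> Hv; rewrite big_distrr -big_split /=; apply: eq_bigr => i _.
rewrite {1}(divn_eq (v i) (dd a i)) Hv mulnDr; congr (_ + _).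
by rewrite -(ad_eq a i) mulnCA mulnC.
Qed.

Lemma key_decomp n (a : 'I_n -> nat) b t s x : Rx a b t s x ->
  b = (\sum_i a i * t i + s) + lcm_all a *
        (\sum_i (x i %/ dd a i) + (b - \sum_i a i * x i) %/ lcm_all a).
Proof.
case/and3P => H1 /forallP H2 /eqP H3.
have E := sum_decomp (v := fun i => (x i : nat)) (fun i => eqP (H2 i)).
have E2 := divn_eq (b - \sum_i a i * x i) (lcm_all a).
rewrite H3 in E2.
rewrite mulnDr; lia.
Qed.

Lemma count_bad n (a : 'I_n -> nat) b t s :
  ~~ ((\sum_i a i * t i + s <= b) && (lcm_all a %| b - (\sum_i a i * t i + s))) ->
  #|[set x | Rx a b t s x]| = 0.
Proof.
move=> Hn; apply/eqP; rewrite cards_eq0; apply/eqP/setP => x; rewrite !inE.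
apply/negbTE/negP => /key_decomp E; move/negP: Hn; apply.
rewrite {1}E leq_addr /=; apply/dvdnP; eexists; rewrite {1}E addKn mulnC; reflexivity.
Qed.

Lemma single_le n (F : 'I_n -> nat) i : F i <= \sum_j F j.
Proof. by rewrite (bigD1 i) //= leq_addr. Qed.

Lemma count_good n (a : 'I_n -> nat) b (t : 'I_n -> nat) s k :
  (forall i, 0 < a i) -> (forall i, t i < dd a i) -> s < lcm_all a ->
  b = \sum_i a i * t i + s + lcm_all a * k ->
  #|[set x | Rx a b t s x]| = 'C(k + n, n).
Proof.
move=> Ha Ht Hs Hb.
have M0 := M_gt0 Ha.
have kb : k <= b by rewrite Hb -{1}(mul1n k) (leq_trans _ (leq_addl _ _)) // leq_mul2r M0 orbT.
pose vg (y : {ffun 'I_n -> 'I_b.+1}) i := dd a i * y i + t i.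
pose g (y : {ffun 'I_n -> 'I_b.+1}) : {ffun 'I_n -> 'I_b.+1} := [ffun i => inord (vg y i)].
have Svg y : \sum_i a i * vg y i = lcm_all a * \sum_i (y i : nat) + \sum_i a i * t i.
  rewrite (@sum_decomp n a (vg y) t); last by move=> i; rewrite /vg mulnC modnMDl modn_small.
  congr (_ * _ + _); apply: eq_bigr => i _.
  by rewrite /vg mulnC divnMDl ?dd_gt0 // divn_small ?addn0.
have Yb (y : {ffun 'I_n -> 'I_b.+1}) i : \sum_(j < n) (y j : nat) <= k -> vg y i < b.+1.
  move=> Hy; rewrite ltnS.
  apply: leq_trans (_ : a i * vg y i <= b).
    by rewrite leq_pmull.
  apply: leq_trans (single_le (fun j => a j * vg y j) i) _.
  rewrite Svg; have := leq_mul2l (lcm_all a) (\sum_j (y j : nat)) k; rewrite Hy orbT => H.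
  lia.
have gv (y : {ffun 'I_n -> 'I_b.+1}) i : \sum_(j < n) (y j : nat) <= k -> (g y i : nat) = vg y i.
  by move=> Hy; rewrite /g ffunE inordK // Yb.
have -> : [set x | Rx a b t s x] = g @: [set y : {ffun 'I_n -> 'I_b.+1} | \sum_(j < n) (y j : nat) <= k].
  apply/setP => x; rewrite inE; apply/idP/imsetP.
  - move=> Rxx; have E := key_decomp Rxx.
    case/and3P: Rxx => H1 /forallP H2 /eqP H3.
    pose y : {ffun 'I_n -> 'I_b.+1} := [ffun i => inord (x i %/ dd a i)].
    have yv i : (y i : nat) = x i %/ dd a i.
      rewrite ffunE inordK // ltnS (leq_trans (leq_div _ _)) // -ltnS; exact: ltn_ord.
    have Sy : \sum_j (y j : nat) = \sum_j (x j %/ dd a j) by apply: eq_bigr => j _; rewrite yv.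
    have Hk : \sum_j (y j : nat) <= k.
      rewrite Sy.
      have : lcm_all a * k = lcm_all a * (\sum_i x i %/ dd a i + (b - \sum_i a i * x i) %/ lcm_all a) by apply: (@addnI (\sum_i a i * t i + s)); rewrite -Hb -E.
      move/eqP; rewrite eqn_pmul2l // => /eqP ->; exact: leq_addr.
    exists y; first by rewrite inE.
    apply/ffunP => i; apply/val_inj => /=; by rewrite gv // /vg yv -(eqP (H2 i)) mulnC -divn_eq.
  - case=> y; rewrite inE => Hy ->.
    have Sg : \sum_i a i * g y i = lcm_all a * \sum_i (y i : nat) + \sum_i a i * t i.
      by rewrite -Svg; apply: eq_bigr => i _; rewrite gv.
    apply/and3P; split.
    + rewrite Sg; have := leq_mul2l (lcm_all a) (\sum_j (y j : nat)) k; rewrite Hy orbT => H; lia.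
    + apply/forallP => i; rewrite gv // /vg mulnC modnMDl modn_small //.
    + rewrite Sg.
      have -> : b - (lcm_all a * \sum_i (y i : nat) + \sum_i a i * t i) = (k - \sum_i (y i : nat)) * lcm_all a + s.
        rewrite mulnBl. have := leq_mul2l (lcm_all a) (\sum_j (y j : nat)) k; rewrite Hy orbT => H; lia.
      by rewrite modnMDl modn_small.
rewrite card_in_imset.
  rewrite -(stars_bars n kb) -sum1_card [LHS]big_mkcond /=.
  by apply: eq_bigr => y _; rewrite inE; case: (_ <= k).
move=> y1 y2; rewrite !inE => H1 H2 E; apply/ffunP => i; apply/val_inj.
have := congr1 (fun f : {ffun 'I_n -> 'I_b.+1} => (f i : nat)) E; rewrite /= !gv // /vg.
move/eqP; rewrite eqn_add2r eqn_pmul2l ?dd_gt0 //; exact/eqP.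
Qed.

Lemma prod_pochh k n : \prod_(j < n) (k.+1 + j) = 'C(k + n, n) * n`!.
Proof.
rewrite bin_ffact; elim: n => [|n IH]; first by rewrite big_ord0 addn0 ffactn0.
by rewrite big_ord_recr /= IH addnS ffactSS addSn mulnC.
Qed.

Local Open Scope ring_scope.

Lemma Cpoch_val n (a : 'I_n -> nat) b (t : 'I_n -> nat) (s : nat) :
  (forall i, (0 < a i)%N) ->
  Cpoch (fval a b t s + 1) n =
  if ((\sum_i a i * t i + s <= b)%N && (lcm_all a %| b - (\sum_i a i * t i + s))%N)
  then ('C((b - (\sum_i a i * t i + s)) %/ lcm_all a + n, n))%:R else 0.
Proof.
move=> Ha; have M0 := M_gt0 Ha.
set T := (\sum_i a i * t i + s)%N.
have MR : (lcm_all a)%:R != 0 :> rat by rewrite pnatr_eq0 -lt0n.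
have Ef : fval a b t s = (b%:R - T%:R) / (lcm_all a)%:R.
  rewrite /fval /T natrD natr_sum opprD addrA; congr ((_ - _ - _) / _).
  by apply: eq_bigr => i _; rewrite natrM.
case: ifP => H.
- case/andP: H => H1 /dvdnP [k Hk].
  have -> : ((b - T) %/ lcm_all a = k)%N by rewrite Hk mulnK.
  have -> : fval a b t s + 1 = k.+1%:R.
    by rewrite Ef -natrB // Hk natrM mulfK // -addn1 natrD.
  rewrite /Cpoch natr_nat ltr0Sn /=.
  under eq_bigr => j _ do rewrite -natrD.
  rewrite -natr_prod prod_pochh natrM mulrC mulfK //.
  by rewrite pnatr_eq0 -lt0n fact_gt0.
- rewrite /Cpoch; case: ifP => //; case/andP => /natrP [m Hm] Hpos.
  exfalso; move/negbT: H => /negP; apply.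
  have m0 : (0 < m)%N by rewrite -(ltr0n rat) -Hm.
  have E1 : b%:R - T%:R = (m.-1 * lcm_all a)%:R :> rat.
    rewrite natrM; apply: (mulIf (invr_neq0 MR)); rewrite -Ef mulfK //.
    by apply: (addIr 1); rewrite Hm natr1 prednK.
  have E2 : b = (T + m.-1 * lcm_all a)%N.
    by apply/eqP; rewrite -(eqr_nat rat) natrD -E1 addrC subrK.
  by rewrite E2 leq_addr /= addKn dvdn_mull.
Qed.

Unset Implicit Arguments.
Set Strict Implicit.

Theorem mainTheorem2 (n : nat) (a : 'I_n -> nat) (b : nat) :
  (1 <= n)%N -> (forall i, (0 < a i)%N) ->
  (Qcount a b)%:R =
    \sum_(t : {ffun 'I_n -> 'I_(lcm_all a)}
            | [forall i, (t i < lcm_all a %/ a i)%N])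
      \sum_(s < lcm_all a)
        Cpoch (fval a b (fun i => nat_of_ord (t i)) s + 1) n.
Proof.
move=> _ Ha; have M0 := M_gt0 Ha.
pose tm (x : {ffun 'I_n -> 'I_b.+1}) : {ffun 'I_n -> 'I_(lcm_all a)} :=
  [ffun i => Ordinal (leq_trans (ltn_pmod (x i) (dd_gt0 i Ha)) (dd_leM a i))].
pose sm (x : {ffun 'I_n -> 'I_b.+1}) : 'I_(lcm_all a) :=
  Ordinal (ltn_pmod (b - \sum_i a i * x i) M0).
rewrite /Qcount -sum1_card.
rewrite (partition_big (fun x => (tm x, sm x))
           (fun p => [forall i, (p.1 i < dd a i)%N])); last first.
  by move=> x _; apply/forallP => i /=; rewrite ffunE /= ltn_pmod // dd_gt0.
rewrite natr_sum pair_big /=.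
apply: eq_big => [[t s]|[t s]] /=; first by rewrite andbT.
move=> /forallP Ht.
rewrite Cpoch_val //.
have -> : (\sum_(x | (x \in [set x : {ffun 'I_n -> 'I_b.+1} | (\sum_(i < n) a i * x i <= b)%N])
            && ((tm x, sm x) == (t, s))) 1)%N
          = #|[set x | Rx a b (fun i => nat_of_ord (t i)) s x]|.
  rewrite -sum1_card; apply: eq_bigl => x; rewrite !inE xpair_eqE /Rx.
  congr (_ && (_ && _)).
  apply/eqP/forallP => [<- i|H]; first by rewrite ffunE.
  by apply/ffunP => i; apply/val_inj; rewrite ffunE /=; apply/eqP/H.
case: ifP => H.
- case/andP: H => H1 H2.
  rewrite (@count_good n a b (fun i => nat_of_ord (t i)) s
             ((b - (\sum_i a i * t i + s)) %/ lcm_all a)) //.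
  by rewrite mulnC divnK // subnKC.
- by rewrite (@count_bad n a b (fun i => nat_of_ord (t i)) s) ?H.
Qed.
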